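(* Let $\phi_1,\dots,\phi_n:\mathbb{R}^d\to\mathbb{R}$ be differentiable and let $P(w)=\frac1n\sum_{i=1}^n\phi_i(w)$. Suppose $P$ is $H$-strongly convex and $(1/\gamma)$-smooth, and let $w^*$ be a minimizer of $P$. Run the stratified-sampling minibatch SGD algorithm described in the context with step sizes $\eta_t=1/(a+Ht)$, where $a\ge 1/\gamma-H$. Then for every $T\ge1$, $$\inf_{t\in[T]}\mathbb{E}P(w_{t+1})-P(w^* )\le\frac1T\sum_{t=1}^T\mathbb{E}P(w_{t+1})-P(w^* )\le\frac1T\Big[\frac a2\|w^*\|^2+\mathbb{E}\sum_{t=1}^T\frac{V_t}{a+Ht}\Big],$$ where $V_t$ is the variance of the stochastic gradient $g_t$ defined in the context.
   Context: $\|\cdot\|$ denotes the Euclidean norm and $[T]=\{1,\dots,T\}$. A differentiable $\phi:\mathbb{R}^d\to\mathbb{R}$ is $H$-strongly convex ($H\ge0$) if $\phi(u)\ge\phi(v)+\nabla\phi(v)^\top(u-v)+\frac H2\|u-v\|^2$ for all $u,v$, and $(1/\gamma)$-smooth ($\gamma>0$) if $\phi(u)\le\phi(v)+\nabla\phi(v)^\top(u-v)+\frac1{2\gamma}\|u-v\|^2$ for all $u,v$. Algorithm (SGD with stratified sampling): start with $w_1=0$. At each step $t=1,2,\dots$, a partition of $[n]=\{1,\dots,n\}$ into nonempty disjoint sets $C_1^t,\dots,C_k^t$ with $|C_i^t|=n_i^t$, and positive integers $b_1^t,\dots,b_k^t$, are chosen (possibly depending on the past, but before the step-$t$ sampling).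 Then, independently across $i$ and of the past given these choices, for each $i$ a multiset $B_i^t$ of $b_i^t$ indices is drawn i.i.d. uniformly (with replacement) from $C_i^t$. Set $g_t=\frac1n\sum_{i=1}^k\frac{n_i^t}{b_i^t}\sum_{s\in B_i^t}\nabla\phi_s(w_t)$ and $w_{t+1}=w_t-\eta_t g_t$. The variance is $V_t=\mathbb{E}\big[\|g_t-\nabla P(w_t)\|^2\,\big|\,\text{past}\big]$ (note $\mathbb{E}[g_t\mid\text{past}]=\nabla P(w_t)$). *)

(* Defs.v *)
From HB Require Import structures.
From mathcomp Require Import all_boot all_order all_algebra.
From mathcomp Require Import all_classical all_reals all_analysis.
Set Implicit Arguments. Unset Strict Implicit. Unset Printing Implicit Defensive.
Import Order.TTheory GRing.Theory Num.Theory.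
Import numFieldNormedType.Exports.
Local Open Scope ring_scope.

Section SGD.
Variables (R : realType) (d n : nat).
Notation vec := 'rV[R]_d.

Definition dotv (u v : vec) : R := \sum_(j < d) u ord0 j * v ord0 j.
Definition sqnorm (u : vec) : R := dotv u u.

Definition is_gradient (f : vec -> R) (g : vec -> vec) : Prop :=
  forall w, differentiable f w /\ forall h, ('d f w : vec -> R) h = dotv (g w) h.

Definition Pavg (phi : 'I_n -> vec -> R) (w : vec) : R :=
  n%:R^-1 * \sum_(i < n) phi i w.
Definition gradavg (grad : 'I_n -> vec -> vec) (w : vec) : vec :=
  n%:R^-1 *: \sum_(i < n) grad i w.

Definition strongly_convex (H : R) (f : vec -> R) (g : vec -> vec) : Prop :=
  forall u v, f v + dotv (g v) (u - v) + H / 2 * sqnorm (u - v) <= f u.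
Definition smooth (gam : R) (f : vec -> R) (g : vec -> vec) : Prop :=
  forall u v, f u <= f v + dotv (g v) (u - v) + 1 / (2 * gam) * sqnorm (u - v).

(* A step choice: the list of blocks (C_i, b_i). *)
Definition choice_t := seq ({set 'I_n} * nat).
(* The outcome of one step: the list of sampled batches B_i (aligned with blocks). *)
Definition outcome := seq (seq 'I_n).
(* A history: outcomes of past steps, most recent first. *)
Definition history := seq outcome.

Definition valid_choice (ch : choice_t) : Prop :=
  (forall j : 'I_n, count (fun p : {set 'I_n} * nat => j \in p.1) ch = 1%N) /\
  (forall p, p \in ch -> p.1 != finset.set0 /\ (0 < p.2)%N).

(* Expectation of F over b i.i.d. uniform draws (with replacement) from C. *)
Fixpoint Ex_draws (C : {set 'I_n}) (b : nat) (F : seq 'I_n -> R) : R :=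
  match b with
  | 0%N => F [::]
  | b'.+1 => #|C|%:R^-1 * \sum_(x in C) Ex_draws C b' (fun s => F (x :: s))
  end.

Fixpoint Ex_step (ch : choice_t) (F : outcome -> R) : R :=
  match ch with
  | [::] => F [::]
  | (C, b) :: rest => Ex_draws C b (fun B => Ex_step rest (fun Bs => F (B :: Bs)))
  end.

Definition stoch_grad (grad : 'I_n -> vec -> vec) (ch : choice_t) (o : outcome)
    (w : vec) : vec :=
  n%:R^-1 *: \sum_(pB <- zip ch o)
     ((#|pB.1.1|%:R / pB.1.2%:R) *: \sum_(s <- pB.2) grad s w).

Variables (grad : 'I_n -> vec -> vec) (strat : history -> choice_t) (eta : nat -> R).

(* Iterate w_{t} after history h of length t-1 (w_1 = 0). *)
Fixpoint iterate (h : history) : vec :=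
  match h with
  | [::] => 0
  | o :: h' => iterate h' - eta (size h').+1 *: stoch_grad grad (strat h') o (iterate h')
  end.

Fixpoint ExT (m : nat) (F : history -> R) (h : history) : R :=
  match m with
  | 0%N => F h
  | m'.+1 => Ex_step (strat h) (fun o => ExT m' F (o :: h))
  end.

(* Conditional variance V_t of g_t given history h (of length t-1). *)
Definition Vcond (h : history) : R :=
  Ex_step (strat h) (fun o =>
    sqnorm (stoch_grad grad (strat h) o (iterate h) - gradavg grad (iterate h))).

End SGD.

(* Main.v *)
Require Import Defs.
From HB Require Import structures.
From mathcomp Require Import all_boot all_order all_algebra.
From mathcomp Require Import all_classical all_reals all_analysis.
From mathcomp Require Import ring lra.
Import Order.TTheory GRing.Theory Num.Theory.
Local Open Scope ring_scope.

Section Aux.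
Variables (R : realType) (d n : nat).
Implicit Types (u v w : 'rV[R]_d).

Lemma dotvC u v : dotv u v = dotv v u.
Proof. by apply: eq_bigr => j _; rewrite mulrC. Qed.
Lemma dotvDr u v w : dotv u (v + w) = dotv u v + dotv u w.
Proof. by rewrite /dotv -big_split; apply: eq_bigr => j _; rewrite mxE mulrDr. Qed.
Lemma dotvZr u v (k : R) : dotv u (k *: v) = k * dotv u v.
Proof. by rewrite /dotv mulr_sumr; apply: eq_bigr => j _; rewrite mxE mulrCA. Qed.
Lemma dotvNr u v : dotv u (- v) = - dotv u v.
Proof. by rewrite -scaleN1r dotvZr mulN1r. Qed.
Lemma dotvBr u v w : dotv u (v - w) = dotv u v - dotv u w.
Proof. by rewrite dotvDr dotvNr. Qed.
Lemma dotv0r u : dotv u 0 = 0.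
Proof. by rewrite /dotv big1 // => j _; rewrite mxE mulr0. Qed.
Lemma dotvDl u v w : dotv (v + w) u = dotv v u + dotv w u.
Proof. by rewrite dotvC dotvDr !(dotvC u). Qed.
Lemma dotvZl u v (k : R) : dotv (k *: v) u = k * dotv v u.
Proof. by rewrite dotvC dotvZr dotvC. Qed.
Lemma dotvNl u v : dotv (- v) u = - dotv v u.
Proof. by rewrite dotvC dotvNr dotvC. Qed.
Lemma dotvBl u v w : dotv (v - w) u = dotv v u - dotv w u.
Proof. by rewrite dotvDl dotvNl. Qed.
Lemma dotv_sumr I (r : seq I) (P : pred I) (F : I -> 'rV[R]_d) u :
  dotv u (\sum_(i <- r | P i) F i) = \sum_(i <- r | P i) dotv u (F i).
Proof. exact: (big_morph (dotv u) (dotvDr u) (dotv0r u)). Qed.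
Lemma sqnorm_ge0 u : 0 <= sqnorm u.
Proof. by apply: sumr_ge0 => j _; rewrite -expr2 sqr_ge0. Qed.
Lemma sqnormB u v : sqnorm (u - v) = sqnorm u - 2 * dotv u v + sqnorm v.
Proof. rewrite /sqnorm dotvBl !dotvBr (dotvC v u); ring. Qed.
Lemma sqnormN u : sqnorm (- u) = sqnorm u.
Proof. by rewrite /sqnorm dotvNl dotvNr opprK. Qed.

Lemma Ex_draws_ext (C : {set 'I_n}) b (F G : seq 'I_n -> R) :
  (forall s, F s = G s) -> Ex_draws C b F = Ex_draws C b G.
Proof.
elim: b F G => [|b IH] F G FG /=; first exact: FG.
congr (_ * _); apply: eq_bigr => x _; exact: IH.
Qed.
Lemma Ex_draws_le (C : {set 'I_n}) b (F G : seq 'I_n -> R) :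
  (forall s, F s <= G s) -> Ex_draws C b F <= Ex_draws C b G.
Proof.
elim: b F G => [|b IH] F G FG /=; first exact: FG.
apply: ler_wpM2l; first by rewrite invr_ge0.
apply: ler_sum => x _; exact: IH.
Qed.
Lemma Ex_drawsD (C : {set 'I_n}) b (F G : seq 'I_n -> R) :
  Ex_draws C b (fun s => F s + G s) = Ex_draws C b F + Ex_draws C b G.
Proof.
elim: b F G => [|b IH] F G //=.
rewrite -mulrDr -big_split /=; congr (_ * _); apply: eq_bigr => x _; exact: IH.
Qed.
Lemma Ex_drawsZ (C : {set 'I_n}) b (F : seq 'I_n -> R) k :
  Ex_draws C b (fun s => k * F s) = k * Ex_draws C b F.
Proof.
elim: b F => [|b IH] F //=.
rewrite mulrCA; congr (_ * _); rewrite mulr_sumr; apply: eq_bigr => x _; exact: IH.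
Qed.
Lemma Ex_draws_cst (C : {set 'I_n}) b (k : R) :
  C != finset.set0 -> Ex_draws C b (fun _ => k) = k.
Proof.
move=> C0; elim: b => [|b IH] //=.
rewrite (eq_bigr (fun _ => k)) // sumr_const -[k *+ _]mulr_natr mulrCA mulVf ?mulr1 //.
by rewrite pnatr_eq0 -lt0n card_gt0.
Qed.
Lemma Ex_draws_sum (C : {set 'I_n}) b (f : 'I_n -> R) :
  C != finset.set0 ->
  Ex_draws C b (fun s => \sum_(x <- s) f x) = b%:R * (#|C|%:R^-1 * \sum_(x in C) f x).
Proof.
move=> C0; elim: b => [|b IH] /=; first by rewrite big_nil mul0r.
rewrite (eq_bigr (fun x => f x + b%:R * (#|C|%:R^-1 * \sum_(x in C) f x))); last first.
  move=> x _; rewrite -IH -(Ex_draws_cst C b (f x) C0) -Ex_drawsD.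
  by apply: Ex_draws_ext => s; rewrite big_cons.
rewrite big_split /= sumr_const -[(_ * _) *+ #|C|]mulr_natr.
have cn0 : (#|C|%:R : R) != 0 by rewrite pnatr_eq0 -lt0n card_gt0.
rewrite -natr1; field; exact: cn0.
Qed.

Lemma Ex_step_ext (ch : choice_t n) (F G : outcome n -> R) :
  (forall o, F o = G o) -> Ex_step ch F = Ex_step ch G.
Proof.
elim: ch F G => [|[C b] ch IH] F G FG /=; first exact: FG.
apply: Ex_draws_ext => B; apply: IH => o; exact: FG.
Qed.
Lemma Ex_step_le (ch : choice_t n) (F G : outcome n -> R) :
  (forall o, F o <= G o) -> Ex_step ch F <= Ex_step ch G.
Proof.
elim: ch F G => [|[C b] ch IH] F G FG /=; first exact: FG.
apply: Ex_draws_le => B; apply: IH => o; exact: FG.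
Qed.
Lemma Ex_stepD (ch : choice_t n) (F G : outcome n -> R) :
  Ex_step ch (fun s => F s + G s) = Ex_step ch F + Ex_step ch G.
Proof.
elim: ch F G => [|[C b] ch IH] F G //=.
rewrite -Ex_drawsD; apply: Ex_draws_ext => B; exact: IH.
Qed.
Lemma Ex_stepZ (ch : choice_t n) (F : outcome n -> R) k :
  Ex_step ch (fun s => k * F s) = k * Ex_step ch F.
Proof.
elim: ch F => [|[C b] ch IH] F //=.
rewrite -Ex_drawsZ; apply: Ex_draws_ext => B; exact: IH.
Qed.
Lemma Ex_step_cst (ch : choice_t n) (k : R) :
  (forall p, p \in ch -> p.1 != finset.set0) -> Ex_step ch (fun _ => k) = k.
Proof.
elim: ch => [|[C b] ch IH] //= Hch.
rewrite (Ex_draws_ext _ _ _ (fun _ => k)); last first.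
  by move=> B; apply: IH => p pin; apply: Hch; rewrite inE pin orbT.
by apply: Ex_draws_cst; apply: (Hch (C, b)); rewrite inE eqxx.
Qed.
Lemma Ex_step_X (ch : choice_t n) (f : 'I_n -> R) :
  (forall p, p \in ch -> p.1 != finset.set0 /\ (0 < p.2)%N) ->
  Ex_step ch (fun o => \sum_(pB <- zip ch o)
      ((#|pB.1.1|%:R / pB.1.2%:R) * \sum_(s <- pB.2) f s))
  = \sum_(p <- ch) \sum_(s in p.1) f s.
Proof.
elim: ch => [|[C b] ch IH] Hch /=; first by rewrite !big_nil.
have Hch' : forall p, p \in ch -> p.1 != finset.set0 /\ (0 < p.2)%N.
  by move=> p pin; apply: Hch; rewrite inE pin orbT.
have [C0 b0] := Hch (C, b) (mem_head _ _).
rewrite big_cons /=.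
rewrite (Ex_draws_ext _ _ _ (fun B => (#|C|%:R / b%:R) * \sum_(s <- B) f s
       + \sum_(p <- ch) \sum_(s in p.1) f s)); last first.
  move=> B; rewrite (Ex_step_ext _ _ (fun Bs => (#|C|%:R / b%:R) * \sum_(s <- B) f s +
      \sum_(pB <- zip ch Bs) ((#|pB.1.1|%:R / pB.1.2%:R) * \sum_(s <- pB.2) f s))).
    by rewrite Ex_stepD Ex_step_cst ?IH // => p pin; exact: (Hch' p pin).1.
  by move=> Bs; rewrite /= big_cons.
rewrite Ex_drawsD Ex_drawsZ Ex_draws_sum // Ex_draws_cst //.
congr (_ + _).
have cn0 : (#|C|%:R : R) != 0 by rewrite pnatr_eq0 -lt0n card_gt0.
have bn0 : (b%:R : R) != 0 by rewrite pnatr_eq0 -lt0n.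
by field; rewrite cn0 bn0.
Qed.
End Aux.
Section Main.
Variables (R : realType) (d n : nat).
Variables (phi : 'I_n -> 'rV[R]_d -> R) (grad : 'I_n -> 'rV[R]_d -> 'rV[R]_d)
  (strat : history n -> choice_t n).
Hypothesis valid : forall h, valid_choice (strat h).

Lemma ExT_le m (F G : history n -> R) h :
  (forall h', size h' = (m + size h)%N -> F h' <= G h') -> ExT strat m F h <= ExT strat m G h.
Proof.
elim: m h => [|m IH] h FG /=; first exact: FG.
apply: Ex_step_le => o; apply: IH => h' sh; apply: FG; by rewrite sh /= addnS.
Qed.
Lemma ExTD m (F G : history n -> R) h :
  ExT strat m (fun h => F h + G h) h = ExT strat m F h + ExT strat m G h.
Proof.
elim: m h => [|m IH] h //=.
rewrite -Ex_stepD; apply: Ex_step_ext => o; exact: IH.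
Qed.
Lemma ExTZ m (F : history n -> R) k h :
  ExT strat m (fun h => k * F h) h = k * ExT strat m F h.
Proof.
elim: m h => [|m IH] h //=.
rewrite -Ex_stepZ; apply: Ex_step_ext => o; exact: IH.
Qed.
Lemma ExT_cst m (k : R) h : ExT strat m (fun _ => k) h = k.
Proof.
elim: m h => [|m IH] h //=.
rewrite (@Ex_step_ext R n _ _ (fun _ => k)) ?Ex_step_cst // => p pin.
exact: ((valid h).2 p pin).1.
Qed.
Lemma ExT_S m (F : history n -> R) h :
  ExT strat m.+1 F h = ExT strat m (fun h' => Ex_step (strat h') (fun o => F (o :: h'))) h.
Proof.
elim: m h => [|m IH] h //=.
apply: Ex_step_ext => o; exact: IH.
Qed.

Lemma partition_sum (ch : choice_t n) (f : 'I_n -> R) :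
  valid_choice ch -> \sum_(p <- ch) \sum_(s in p.1) f s = \sum_s f s.
Proof.
move=> [Hc _].
rewrite (eq_bigr (fun p : {set 'I_n} * nat => \sum_s (if s \in p.1 then f s else 0)));
  last by move=> p _; rewrite big_mkcond.
rewrite exchange_big /=; apply: eq_bigr => s _.
rewrite -big_mkcond big_const_seq /= Hc /=; exact: addr0.
Qed.

Lemma unbiased (ch : choice_t n) w c :
  valid_choice ch ->
  Ex_step ch (fun o => dotv c (stoch_grad grad ch o w)) = dotv c (gradavg grad w).
Proof.
move=> vc.
rewrite (@Ex_step_ext R n _ _ (fun o => n%:R^-1 * \sum_(pB <- zip ch o)
      ((#|pB.1.1|%:R / pB.1.2%:R) * \sum_(s <- pB.2) dotv c (grad s w)))); last first.
  move=> o; rewrite /stoch_grad dotvZr dotv_sumr; congr (_ * _).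
  by apply: eq_bigr => pB _; rewrite dotvZr dotv_sumr.
rewrite Ex_stepZ Ex_step_X; last exact: vc.2.
by rewrite partition_sum // /gradavg dotvZr dotv_sumr.
Qed.

Lemma second_moment (ch : choice_t n) w :
  valid_choice ch ->
  Ex_step ch (fun o => sqnorm (stoch_grad grad ch o w)) =
  sqnorm (gradavg grad w) +
  Ex_step ch (fun o => sqnorm (stoch_grad grad ch o w - gradavg grad w)).
Proof.
move=> vc; set m := gradavg grad w.
rewrite (@Ex_step_ext R n _ _ (fun o => sqnorm (stoch_grad grad ch o w - m) +
   (2 * dotv m (stoch_grad grad ch o w) + (- sqnorm m)))); last first.
  by move=> o; rewrite sqnormB (dotvC _ _ _ m); ring.
rewrite Ex_stepD Ex_stepD Ex_stepZ unbiased // Ex_step_cst; last by move=> p /(vc.2 p) [].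
rewrite /sqnorm; ring.
Qed.
End Main.
Section Step.
Variables (R : realType) (d n : nat).
Variables (phi : 'I_n -> 'rV[R]_d -> R) (grad : 'I_n -> 'rV[R]_d -> 'rV[R]_d)
  (strat : history n -> choice_t n) (H gam a : R) (wstar : 'rV[R]_d).
Hypothesis valid : forall h, valid_choice (strat h).
Hypotheses (H0 : 0 <= H) (gam0 : 0 < gam).
Hypothesis sc : strongly_convex H (Pavg phi) (gradavg grad).
Hypothesis sm : smooth gam (Pavg phi) (gradavg grad).
Hypothesis ha : a >= 1 / gam - H.

Definition etaf := fun t : nat => 1 / (a + H * t%:R).

Lemma sqnormZ (k : R) (u : 'rV[R]_d) : sqnorm (k *: u) = k ^+ 2 * sqnorm u.
Proof. by rewrite /sqnorm dotvZl dotvZr expr2 mulrA. Qed.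

Lemma x_pos (s : nat) : 1 / gam <= a + H * s.+1%:R.
Proof.
have : H <= H * s.+1%:R by rewrite ler_peMr // ler1n.
move=> hh; move: hh ha; generalize (1 / gam) (H * s.+1%:R) => u v; lra.
Qed.

Lemma step h :
  Ex_step (strat h) (fun o =>
     Pavg phi (iterate grad strat etaf (o :: h)) +
     (a + H * (size h).+1%:R) / 2 * sqnorm (iterate grad strat etaf (o :: h) - wstar))
  <= Pavg phi wstar + (a + H * (size h)%:R) / 2 * sqnorm (iterate grad strat etaf h - wstar)
     + Vcond grad strat etaf h / (a + H * (size h).+1%:R).
Proof.
set w := iterate grad strat etaf h.
set x := a + H * (size h).+1%:R.
set ch := strat h.
have g1 : 0 < 1 / gam by rewrite divr_gt0.
have xg : 1 / gam <= x by exact: x_pos.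
have xp : 0 < x by exact: lt_le_trans xg.
set e := etaf (size h).+1.
have ee : e = x^-1 by rewrite /e /etaf div1r.
have ex : e * x = 1 by rewrite ee mulVf // gt_eqF.
have ep : 0 < e by rewrite ee invr_gt0.
have eg : e <= gam.
  rewrite ee -[gam]invrK lef_pV2 ?posrE ?invr_gt0 //.
  by move: xg; rewrite div1r.
have q : e ^+ 2 / (2 * gam) <= e / 2.
  have -> : e ^+ 2 / (2 * gam) = e / 2 * (e / gam).
    by field; rewrite gt_eqF.
  rewrite -[X in _ <= X]mulr1; apply: ler_wpM2l; first by rewrite divr_ge0 // ltW.
  by rewrite ler_pdivrMr // mul1r.
set m := gradavg grad w.
set g := fun o => stoch_grad grad ch o w.
apply: (@le_trans _ _ (Ex_step ch (fun o =>
   Pavg phi w + x / 2 * sqnorm (w - wstar) + (- e) * dotv m (g o)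
   + (e ^+ 2 / (2 * gam) + e / 2) * sqnorm (g o) + (-1) * dotv (w - wstar) (g o)))).
  apply: Ex_step_le => o /=.
  rewrite -/w -/ch -/e -/(g o).
  have := sm (w - e *: g o) w.
  move: (g o) => G.
  have E1 : w - e *: G - w = -(e *: G) by rewrite addrAC subrr add0r.
  have E2 : w - e *: G - wstar = (w - wstar) - e *: G by rewrite addrAC.
  rewrite -/m E1 E2 dotvNr (dotvZr _ _ m) sqnormN (sqnormZ e G).
  rewrite (sqnormB _ _ (w - wstar)) (dotvZr _ _ (w - wstar)) (sqnormZ e G) => hsm.
  have -> : x / 2 * (sqnorm (w - wstar) - 2 * (e * dotv (w - wstar) G) +
      e ^+ 2 * sqnorm G) = x / 2 * sqnorm (w - wstar) - (e * x) * dotv (w - wstar) G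
      + (e * x) * e / 2 * sqnorm G.
    move: (sqnorm (w - wstar)) (dotv (w - wstar) G) (sqnorm G) => A B C.
    by field.
  rewrite ex. lra.
have nz : forall p, p \in ch -> p.1 != finset.set0 by move=> p /((valid h).2 p) [].
have vc := valid h.
rewrite !Ex_stepD !Ex_stepZ !(Ex_step_cst _ _ _ _ nz).
rewrite /g second_moment ?unbiased //.
rewrite -/m -/(Vcond grad strat etaf h).
have Vp : 0 <= Vcond grad strat etaf h.
  rewrite /Vcond -(Ex_step_cst _ _ ch 0 nz); apply: Ex_step_le => o; exact: sqnorm_ge0.
have mp : 0 <= sqnorm m by exact: sqnorm_ge0.
have := sc wstar w.
rewrite -/m -opprB dotvNr sqnormN (dotvC _ _ m) => hsc.
have k1 : (e ^+ 2 / (2 * gam) - e / 2) * sqnorm m <= 0.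
  by apply: mulr_le0_ge0 => //; rewrite subr_le0.
have k2 : (e ^+ 2 / (2 * gam) - e / 2) * Vcond grad strat etaf h <= 0.
  by apply: mulr_le0_ge0 => //; rewrite subr_le0.
have -> : Vcond grad strat etaf h / x = e * Vcond grad strat etaf h by rewrite ee mulrC.
have hx : x = a + H * (size h)%:R + H by rewrite /x -natr1; ring.
rewrite hx.
rewrite /sqnorm /Pavg in mp k1 hsc *.
lra.
Qed.
End Step.

Theorem theorem1 (R : realType) (d n : nat)
  (phi : 'I_n -> 'rV[R]_d -> R) (grad : 'I_n -> 'rV[R]_d -> 'rV[R]_d)
  (H gam a : R) (wstar : 'rV[R]_d) (strat : history n -> choice_t n) (T : nat) :
  (0 < n)%N ->
  (forall i, is_gradient (phi i) (grad i)) ->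
  0 <= H -> 0 < gam ->
  strongly_convex H (Pavg phi) (gradavg grad) ->
  smooth gam (Pavg phi) (gradavg grad) ->
  (forall w, Pavg phi wstar <= Pavg phi w) ->
  a >= 1 / gam - H ->
  (forall h, valid_choice (strat h)) ->
  (1 <= T)%N ->
  let eta := fun t : nat => 1 / (a + H * t%:R) in
  let EP := fun t : nat =>
    ExT strat t (fun h => Pavg phi (iterate grad strat eta h)) [::] in
  let avg := T%:R^-1 * \sum_(1 <= t < T.+1) EP t in
  (\big[Num.min/EP 1%N]_(1 <= t < T.+1) EP t) - Pavg phi wstar
    <= avg - Pavg phi wstar /\
  avg - Pavg phi wstar <=
    T%:R^-1 * (a / 2 * sqnorm wstar +
      \sum_(1 <= t < T.+1)
        ExT strat t.-1 (fun h => Vcond grad strat eta h / (a + H * t%:R)) [::]).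
Proof.
move=> n0 _ H0 gam0 sc sm _ ha valid T1 eta EP avg.
set Ps := Pavg phi wstar.
pose D t := ExT strat t (fun h => sqnorm (iterate grad strat eta h - wstar)) [::].
pose W t := ExT strat t.-1 (fun h => Vcond grad strat eta h / (a + H * t%:R)) [::].
have stepT : forall k, EP k.+1 + (a + H * k.+1%:R) / 2 * D k.+1 <=
    Ps + (a + H * k%:R) / 2 * D k + W k.+1.
  move=> k.
  have -> : EP k.+1 + (a + H * k.+1%:R) / 2 * D k.+1 = ExT strat k.+1 (fun h =>
      Pavg phi (iterate grad strat eta h) +
      (a + H * k.+1%:R) / 2 * sqnorm (iterate grad strat eta h - wstar)) [::].
    by rewrite ExTD ExTZ.
  rewrite ExT_S.
  apply: le_trans (@ExT_le R n strat k _ (fun h => Ps +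
     (a + H * k%:R) / 2 * sqnorm (iterate grad strat eta h - wstar) +
     Vcond grad strat eta h / (a + H * k.+1%:R)) [::] _) _.
    move=> h' sh; rewrite addn0 in sh.
    have := @step R d n phi grad strat H gam a wstar valid H0 gam0 sc sm ha h'.
    by rewrite sh.
  by rewrite !ExTD ExTZ ExT_cst.
have main : forall k, \sum_(1 <= t < k.+1) (EP t - Ps) + (a + H * k%:R) / 2 * D k
    <= a / 2 * sqnorm wstar + \sum_(1 <= t < k.+1) W t.
  elim => [|k IH].
    by rewrite !big_geq // mulr0 addr0 /D /= sub0r sqnormN add0r addr0.
  rewrite big_nat_recr //= [X in _ <= _ + X]big_nat_recr //=.
  have := stepT k; move: IH.
  move: (\sum_(1 <= i < k.+1) (EP i - Ps)) (\sum_(1 <= i < k.+1) W i) => A B.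
  move: (EP k.+1) (D k) (D k.+1) (W k.+1) => x y z u.
  lra.
have DT : 0 <= D T.
  rewrite /D -(@ExT_cst R n strat valid T 0 [::]).
  apply: ExT_le => // h _; exact: sqnorm_ge0.
have cT : 0 < (a + H * T%:R) / 2.
  apply: divr_gt0 => //.
  case: T T1 {avg main DT} => // T' _.
  have := @x_pos R H gam a H0 ha T'. have : 0 < 1 / gam by exact: divr_gt0. move: (1 / gam) => u. move=> ? ?; lra.
have Tn0 : (T%:R : R) != 0 by rewrite pnatr_eq0 -lt0n.
have Tp : 0 <= (T%:R : R)^-1 by rewrite invr_ge0.
have avgE : avg - Ps = T%:R^-1 * \sum_(1 <= t < T.+1) (EP t - Ps).
  rewrite /avg sumrB sumr_const_nat subn1 /= -[Ps *+ T]mulr_natr.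
  by field.
split.
  rewrite lerD2r /avg.
  set mn := \big[Num.min/EP 1%N]_(1 <= t < T.+1) EP t.
  have le1 : \sum_(1 <= t < T.+1) mn <= \sum_(1 <= t < T.+1) EP t.
    apply: ler_sum_nat => t tin; rewrite /mn.
    by apply: ge_bigmin_seq; rewrite ?mem_index_iota.
  rewrite sumr_const_nat subn1 /= -[mn *+ T]mulr_natr in le1.
  have -> : mn = T%:R^-1 * (mn * T%:R) by field.
  exact: ler_wpM2l.
rewrite avgE; apply: ler_wpM2l => //.
have := main T.
have := mulr_ge0 (ltW cT) DT.
move: (\sum_(1 <= i < T.+1) (EP i - Ps)) (\sum_(1 <= i < T.+1) W i) => A B.
move: ((a + H * T%:R) / 2 * D T) => z.
lra.
Qed.
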